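(* Let $\mathsf{K}$ be a variety, $\mathbf{B}\in\mathsf{K}$, and $\mathbf{A}\leq\mathbf{B}$ full in $\mathsf{K}$. If $\phi$ is a congruence of $\mathbf{A}$ and there exists a congruence $\theta$ of $\mathbf{B}$ with $\theta\neq\mathrm{id}_B$ and $\theta{\upharpoonright}_A\subseteq\phi$, then $\phi=\mathrm{Cg}^{\mathbf{B}}(\phi){\upharpoonright}_A$.
   Context: $\mathrm{Cg}^{\mathbf{B}}(X)$ is the least congruence of $\mathbf{B}$ containing $X\subseteq B\times B$; $\theta{\upharpoonright}_A=\theta\cap(A\times A)$. $\mathbf{A}\leq\mathbf{B}$ is full in $\mathsf{K}$ if it is proper, almost total ($B=\mathrm{Sg}^{\mathbf{B}}(A\cup\{b\})$ for some $b\in B$), and every congruence $\theta\neq\mathrm{id}_B$ of $\mathbf{B}$ relates each $b\in B$ to some $a\in A$. *)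

(* Defs.v *)
From mathcomp Require Import all_boot.
Set Implicit Arguments. Unset Strict Implicit. Unset Printing Implicit Defensive.

Record signature := Signature { sym : Type; arity : sym -> nat }.

Record algebra (S : signature) := Algebra {
  carrier :> Type;
  op : forall f : sym S, ('I_(arity f) -> carrier) -> carrier }.

Section UA.
Variable S : signature.

Inductive term : Type :=
| Var : nat -> term
| App : forall f : sym S, ('I_(arity f) -> term) -> term.

Fixpoint eval (B : algebra S) (v : nat -> B) (t : term) : B :=
  match t with
  | Var n => v n
  | App f ts => @op S B f (fun i => eval v (ts i))
  end.

Definition identity := (term * term)%type.

Definition satisfies (B : algebra S) (e : identity) : Prop :=
  forall v : nat -> B, eval v e.1 = eval v e.2.

Definition is_variety (K : algebra S -> Prop) : Prop :=
  exists E : identity -> Prop,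
    forall B : algebra S, K B <-> (forall e, E e -> satisfies B e).

Variable B : algebra S.

Definition subuniverse (A : B -> Prop) : Prop :=
  forall f (xs : 'I_(arity f) -> B), (forall i, A (xs i)) -> A (@op S B f xs).

Definition subalgebra (A : B -> Prop) : Prop :=
  subuniverse A /\ exists a, A a.

Definition Sg (X : B -> Prop) (x : B) : Prop :=
  forall U, subuniverse U -> (forall y, X y -> U y) -> U x.

Definition congruence (theta : B -> B -> Prop) : Prop :=
  (forall x, theta x x) /\
  (forall x y, theta x y -> theta y x) /\
  (forall x y z, theta x y -> theta y z -> theta x z) /\
  (forall f (xs ys : 'I_(arity f) -> B),
      (forall i, theta (xs i) (ys i)) -> theta (@op S B f xs) (@op S B f ys)).

(* Congruence of the subalgebra with universe A, as a relation on A x A. *)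
Definition congruence_on (A : B -> Prop) (phi : B -> B -> Prop) : Prop :=
  (forall x y, phi x y -> A x /\ A y) /\
  (forall x, A x -> phi x x) /\
  (forall x y, phi x y -> phi y x) /\
  (forall x y z, phi x y -> phi y z -> phi x z) /\
  (forall f (xs ys : 'I_(arity f) -> B),
      (forall i, phi (xs i) (ys i)) -> phi (@op S B f xs) (@op S B f ys)).

Definition Cg (X : B -> B -> Prop) (x y : B) : Prop :=
  forall theta, congruence theta -> (forall a b, X a b -> theta a b) -> theta x y.

Definition restr (theta : B -> B -> Prop) (A : B -> Prop) (x y : B) : Prop :=
  theta x y /\ A x /\ A y.

Definition is_id (theta : B -> B -> Prop) : Prop :=
  forall x y, theta x y <-> x = y.

Definition rel_eq (r s : B -> B -> Prop) : Prop := forall x y, r x y <-> s x y.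

Definition rel_sub (r s : B -> B -> Prop) : Prop := forall x y, r x y -> s x y.

End UA.

(* A <= B is full in K (with B in K): proper, almost total, and every
   nontrivial congruence of B relates each element of B to an element of A. *)
Definition full (S : signature) (K : algebra S -> Prop) (B : algebra S)
    (A : B -> Prop) : Prop :=
  K B /\ subalgebra A /\
  (exists b : B, ~ A b) /\
  (exists b : B, forall x, Sg (fun y => A y \/ y = b) x) /\
  (forall theta, congruence theta -> ~ is_id theta ->
     forall b : B, exists a, A a /\ theta b a).

(* Main.v *)
Require Import Defs.
From mathcomp Require Import all_boot.
From Stdlib Require Import ClassicalEpsilon.

Theorem mainTheorem14 (S : signature) (K : algebra S -> Prop)
    (B : algebra S) (A : B -> Prop) (phi : B -> B -> Prop) :
  is_variety K -> K B -> full K A ->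
  congruence_on A phi ->
  (exists theta, congruence theta /\ ~ is_id theta /\ rel_sub (restr theta A) phi) ->
  rel_eq phi (restr (Cg phi) A).
Proof.
move=> _ _ [_ [[subA _] [_ [_ Hfull]]]] [phA [phR [phS [phT phC]]]]
  [th [[thR [thS [thT thC]]] [thn thsub]]].
have thc : congruence th by split; [|split; [|split]].
have Hb := Hfull th thc thn.
move=> x y; split.
  move=> Hxy; have [Ax Ay] := phA _ _ Hxy.
  split; last by split.
  by move=> t _ H; apply: H.
move=> [Hc [Ax Ay]].
pose rho x y := exists a a', A a /\ A a' /\ th x a /\ th y a' /\ phi a a'.
have rc : congruence rho.
  split; [|split; [|split]].
  - move=> z; have [a [Aa ta]] := Hb z; exists a, a; repeat split => //; exact: phR.
  - move=> u v [a [a' [Aa [Aa' [h1 [h2 h3]]]]]]; exists a', a; repeat split => //; exact: phS.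
  - move=> u v w [a [a' [Aa [Aa' [h1 [h2 h3]]]]]] [c [c' [Ac [Ac' [k1 [k2 k3]]]]]].
    exists a, c'; repeat split => //.
    apply: (phT _ c) => //; apply: (phT _ a') => //.
    apply: thsub; split => //; apply: (thT _ v) => //; exact: thS.
  - move=> f xs ys H.
    have Hi : forall i, { p : B * B | let (a, a') := p in
                A a /\ A a' /\ th (xs i) a /\ th (ys i) a' /\ phi a a' }.
      move=> i; apply: constructive_indefinite_description.
      have [a [a' ?]] := H i; by exists (a, a').
    exists (op (fun i => (proj1_sig (Hi i)).1)), (op (fun i => (proj1_sig (Hi i)).2)).
    have P i := proj2_sig (Hi i).
    split; [apply: subA => i; by case: (Hi i) => [[a a']] /= [? _]|].
    split; [apply: subA => i; by case: (Hi i) => [[a a']] /= [_ [? _]]|].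
    split; [apply: thC => i; by case: (Hi i) => [[a a']] /= [_ [_ [? _]]]|].
    split; [apply: thC => i; by case: (Hi i) => [[a a']] /= [_ [_ [_ [? _]]]]|].
    apply: phC => i; by case: (Hi i) => [[a a']] /= [_ [_ [_ [_ ?]]]].
have Hr : rho x y.
  apply: Hc => // a b Hab; have [Aa Ab] := phA _ _ Hab.
  exists a, b; split; [done|split; [done|split; [exact: thR|split; [exact: thR|done]]]].
case: Hr => [a [a' [Aa [Aa' [h1 [h2 h3]]]]]].
apply: (phT _ a); first by apply: thsub; split.
apply: (phT _ a') => //; apply: phS; by apply: thsub; split.
Qed.
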